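(* For every commutative ring $k$, the Turaev category $\mathcal{T}_k$ has equalizers and coequalizers.
   Context: Let $k$ be a commutative ring. A Turaev $k$-module is a pair $(X,M)$ with $X$ a set and $M=(M_x)_{x\in X}$ a family of $k$-modules. The Turaev category $\mathcal{T}_k$ has Turaev $k$-modules as objects; a morphism $(X,M)\to(Y,N)$ is a pair $(f,\varphi)$ with $f:Y\to X$ a function and $\varphi=(\varphi_y:M_{f(y)}\to N_y)_{y\in Y}$ a family of $k$-linear maps; composition is $(g,\psi)\circ(f,\varphi)=(f\circ g,(\psi_z\circ\varphi_{g(z)})_{z})$. *)

(* Defs.v *)
From HB Require Import structures.
From mathcomp Require Import all_boot all_algebra.
Set Implicit Arguments. Unset Strict Implicit. Unset Printing Implicit Defensive.
Import GRing.Theory.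
Local Open Scope ring_scope.

Record TuraevMod (k : comPzRingType) := TMod {
  tm_set : Type;
  tm_mod : tm_set -> lmodType k
}.
Arguments tm_set {k} t.
Arguments tm_mod {k} t x.

Record TuraevHom (k : comPzRingType) (A B : TuraevMod k) := THom {
  th_fun : tm_set B -> tm_set A;
  th_map : forall y : tm_set B, tm_mod A (th_fun y) -> tm_mod B y;
  th_lin : forall y : tm_set B, linear (@th_map y)
}.
Arguments THom {k A B}.
Arguments th_fun {k A B}.
Arguments th_map {k A B}.
Arguments th_lin {k A B}.

Definition tidmap (k : comPzRingType) (A : TuraevMod k) : TuraevHom A A :=
  @THom k A A (fun x => x) (fun x (m : tm_mod A x) => m)
    (fun x a u v => erefl).

Definition tcomp (k : comPzRingType) (A B C : TuraevMod k)
  (G : TuraevHom B C) (F : TuraevHom A B) : TuraevHom A C.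
Proof.
refine (@THom k A C (fun z => th_fun F (th_fun G z))
  (fun z m => th_map G z (th_map F (th_fun G z) m)) _).
move=> z a u v /=.
by rewrite (th_lin F) (th_lin G).
Defined.

Definition is_equalizer (k : comPzRingType) (A B : TuraevMod k)
  (F G : TuraevHom A B) (E : TuraevMod k) (e : TuraevHom E A) : Prop :=
  tcomp F e = tcomp G e /\
  forall (Z : TuraevMod k) (h : TuraevHom Z A), tcomp F h = tcomp G h ->
    exists u : TuraevHom Z E, tcomp e u = h /\
      forall u' : TuraevHom Z E, tcomp e u' = h -> u' = u.

Definition is_coequalizer (k : comPzRingType) (A B : TuraevMod k)
  (F G : TuraevHom A B) (Q : TuraevMod k) (q : TuraevHom B Q) : Prop :=
  tcomp q F = tcomp q G /\
  forall (Z : TuraevMod k) (h : TuraevHom B Z), tcomp h F = tcomp h G ->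
    exists u : TuraevHom Q Z, tcomp u q = h /\
      forall u' : TuraevHom Q Z, tcomp u' q = h -> u' = u.

(* Main.v *)
Require Import Defs.
From HB Require Import structures.
From mathcomp Require Import all_boot all_algebra.
From mathcomp Require Import boolp.
From Stdlib Require Import ClassicalEpsilon ProofIrrelevance.
Set Implicit Arguments. Unset Strict Implicit. Unset Printing Implicit Defensive.
Import GRing.Theory.
Local Open Scope ring_scope.


Record subm (k : comPzRingType) (N : lmodType k) := Subm {
  sm_pred : N -> Prop;
  sm0 : sm_pred 0;
  smL : forall a u v, sm_pred u -> sm_pred v -> sm_pred (a *: u + v) }.

Section Quot.
Variables (k : comPzRingType) (N : lmodType k) (S : subm N).
Let D := sm_pred S.
Lemma DN u : D u -> D (- u).
Proof. by move=> H; have := smL (-1) H (sm0 S); rewrite addr0 scaleN1r. Qed.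
Lemma DD u v : D u -> D v -> D (u + v).
Proof. by move=> H1 H2; have := smL 1 H1 H2; rewrite scale1r. Qed.
Definition eqv (x y : N) := D (x - y).
Lemma eqv_refl x : eqv x x. Proof. by rewrite /eqv subrr; apply: sm0. Qed.
Lemma eqv_sym x y : eqv x y -> eqv y x.
Proof. by move=> /DN; rewrite /eqv opprB. Qed.
Lemma eqv_trans x y z : eqv x y -> eqv y z -> eqv x z.
Proof. by move=> H1 H2; have := DD H1 H2; rewrite /eqv addrA subrK. Qed.
Definition qrep (x : N) : N := epsilon (inhabits x) (fun y => eqv x y).
Lemma qrepP x : eqv x (qrep x).
Proof. by apply: (epsilon_spec (inhabits x) (fun y => eqv x y)); exists x; apply: eqv_refl. Qed.
Lemma qrep_eq x y : eqv x y -> qrep x = qrep y.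
Proof.
move=> H; rewrite /qrep.
have -> : (fun z => eqv x z) = (fun z => eqv y z).
  apply: funext => z; apply: propext; split.
  - by apply: eqv_trans; apply: eqv_sym.
  - by apply: eqv_trans.
by rewrite (proof_irrelevance _ (inhabits x) (inhabits y)).
Qed.
Definition quot := {x : N | qrep x = x}.
HB.instance Definition _ := gen_eqMixin quot.
HB.instance Definition _ := gen_choiceMixin quot.
Lemma qrep_idem x : qrep (qrep x) = qrep x.
Proof. by symmetry; apply: qrep_eq; apply: qrepP. Qed.
Definition pi (x : N) : quot := exist _ (qrep x) (qrep_idem x).
Lemma pi_eq x y : eqv x y -> pi x = pi y.
Proof.
move=> H; rewrite /pi; move: (qrep_idem x) (qrep_idem y); rewrite (qrep_eq H) => p q.
by rewrite (proof_irrelevance _ p q).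
Qed.
Lemma pi_eqv x y : pi x = pi y -> eqv x y.
Proof.
move=> /(f_equal (@proj1_sig _ _)) /= H.
apply: eqv_trans (qrepP x) _; rewrite H; apply: eqv_sym; apply: qrepP.
Qed.
Lemma pi_val (q : quot) : pi (proj1_sig q) = q.
Proof.
case: q => x p; rewrite /pi /=; move: (qrep_idem x); rewrite p => p'.
by rewrite (proof_irrelevance _ p p').
Qed.
Lemma quot_ind (P : quot -> Prop) : (forall x, P (pi x)) -> forall q, P q.
Proof. by move=> H q; rewrite -(pi_val q). Qed.
Lemma eqv_val x : eqv (proj1_sig (pi x)) x.
Proof. by apply: eqv_sym; apply: qrepP. Qed.

Definition qzero := pi 0.
Definition qadd (a b : quot) := pi (proj1_sig a + proj1_sig b).
Definition qopp (a : quot) := pi (- proj1_sig a).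
Definition qscale (c : k) (a : quot) := pi (c *: proj1_sig a).
Lemma eqv_lin c x x' y y' : eqv x x' -> eqv y y' -> eqv (c *: x + y) (c *: x' + y').
Proof.
move=> H1 H2; have := smL c H1 H2; rewrite /eqv.
by congr (D _); rewrite scalerBr opprD addrACA.
Qed.
Lemma qaddE x y : qadd (pi x) (pi y) = pi (x + y).
Proof. apply: pi_eq; have := eqv_lin 1 (eqv_val x) (eqv_val y); by rewrite !scale1r. Qed.
Lemma qoppE x : qopp (pi x) = pi (- x).
Proof. apply: pi_eq; have := eqv_lin (-1) (eqv_val x) (eqv_refl 0); by rewrite !addr0 !scaleN1r. Qed.
Lemma qscaleE c x : qscale c (pi x) = pi (c *: x).
Proof. apply: pi_eq; have := eqv_lin c (eqv_val x) (eqv_refl 0); by rewrite !addr0. Qed.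

Lemma qaddA : associative qadd.
Proof. by elim/quot_ind=> x; elim/quot_ind=> y; elim/quot_ind=> z; rewrite !qaddE addrA. Qed.
Lemma qaddC : commutative qadd.
Proof. by elim/quot_ind=> x; elim/quot_ind=> y; rewrite !qaddE addrC. Qed.
Lemma qadd0 : left_id qzero qadd.
Proof. by elim/quot_ind=> x; rewrite /qzero qaddE add0r. Qed.
Lemma qaddN : left_inverse qzero qopp qadd.
Proof. by elim/quot_ind=> x; rewrite qoppE qaddE addNr. Qed.
HB.instance Definition _ := GRing.isZmodule.Build quot qaddA qaddC qadd0 qaddN.
Lemma qaddE' x y : pi x + pi y = pi (x + y). Proof. exact: qaddE. Qed.
Lemma qscaleA a b v : qscale a (qscale b v) = qscale (a * b) v.
Proof. by elim/quot_ind: v => x; rewrite !qscaleE scalerA. Qed.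
Lemma qscale1 : left_id 1 qscale.
Proof. by elim/quot_ind=> x; rewrite qscaleE scale1r. Qed.
Lemma qscaleDr : right_distributive qscale +%R.
Proof. move=> a; elim/quot_ind=> x; elim/quot_ind=> y.
by rewrite (qaddE' x y) !qscaleE (qaddE' (a *: x)) scalerDr. Qed.
Lemma qscaleDl v : {morph qscale^~ v: a b / a + b}.
Proof. elim/quot_ind: v => x a b; rewrite !qscaleE.
by rewrite (qaddE' (a *: x)) scalerDl. Qed.
HB.instance Definition _ := GRing.Zmodule_isLmodule.Build k quot qscaleA qscale1 qscaleDr qscaleDl.

Lemma pi_lin c x y : pi (c *: x + y) = c *: pi x + pi y.
Proof. by rewrite -qaddE' -qscaleE. Qed.
End Quot.



Section SP.
Variables (k : comPzRingType) (I : Type) (Mi : I -> lmodType k).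
Record spsub := SpSub {
  sp_pred : (forall i, Mi i) -> Prop;
  sp0 : sp_pred (fun _ => 0);
  spL : forall a m1 m2, sp_pred m1 -> sp_pred m2 -> sp_pred (fun i => a *: m1 i + m2 i) }.
Variable S : spsub.
Definition spt := {m : forall i, Mi i | sp_pred S m}.
HB.instance Definition _ := gen_eqMixin spt.
HB.instance Definition _ := gen_choiceMixin spt.
Lemma spt_eq (a b : spt) : (forall i, proj1_sig a i = proj1_sig b i) -> a = b.
Proof.
case: a b => [a pa] [b pb] /= H.
have E : a = b by apply: functional_extensionality_dep.
by subst b; rewrite (Prop_irrelevance pa pb).
Qed.
Lemma spP (a : spt) : sp_pred S (proj1_sig a). Proof. exact: proj2_sig a. Qed.
Lemma sp_add m1 m2 : sp_pred S m1 -> sp_pred S m2 -> sp_pred S (fun i => m1 i + m2 i).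
Proof.
move=> p1 p2; have := spL 1 p1 p2.
by have -> : (fun i => 1 *: m1 i + m2 i) = (fun i => m1 i + m2 i)
  by apply: functional_extensionality_dep => i; rewrite scale1r.
Qed.
Lemma sp_scale c m1 : sp_pred S m1 -> sp_pred S (fun i => c *: m1 i).
Proof.
move=> p1; have := spL c p1 (sp0 S).
by have -> : (fun i => c *: m1 i + 0) = (fun i => c *: m1 i)
  by apply: functional_extensionality_dep => i; rewrite addr0.
Qed.
Lemma sp_opp m1 : sp_pred S m1 -> sp_pred S (fun i => - m1 i).
Proof.
move=> p1; have := sp_scale (-1) p1.
by have -> : (fun i => -1 *: m1 i) = (fun i => - m1 i)
  by apply: functional_extensionality_dep => i; rewrite scaleN1r.
Qed.
Definition spzero : spt := exist _ _ (sp0 S).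
Definition spadd (a b : spt) : spt := exist _ _ (sp_add (spP a) (spP b)).
Definition spopp (a : spt) : spt := exist _ _ (sp_opp (spP a)).
Definition spscale c (a : spt) : spt := exist _ _ (sp_scale c (spP a)).
Lemma spaddA : associative spadd.
Proof. by move=> a b c; apply: spt_eq => i /=; rewrite addrA. Qed.
Lemma spaddC : commutative spadd.
Proof. by move=> a b; apply: spt_eq => i /=; rewrite addrC. Qed.
Lemma spadd0 : left_id spzero spadd.
Proof. by move=> a; apply: spt_eq => i /=; rewrite add0r. Qed.
Lemma spaddN : left_inverse spzero spopp spadd.
Proof. by move=> a; apply: spt_eq => i /=; rewrite addNr. Qed.
HB.instance Definition _ := GRing.isZmodule.Build spt spaddA spaddC spadd0 spaddN.
Lemma spscaleA a b v : spscale a (spscale b v) = spscale (a * b) v.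
Proof. by apply: spt_eq => i /=; rewrite scalerA. Qed.
Lemma spscale1 : left_id 1 spscale.
Proof. by move=> a; apply: spt_eq => i /=; rewrite scale1r. Qed.
Lemma spscaleDr : right_distributive spscale +%R.
Proof. by move=> a u v; apply: spt_eq => i /=; rewrite scalerDr. Qed.
Lemma spscaleDl v : {morph spscale^~ v: a b / a + b}.
Proof. by move=> a b; apply: spt_eq => i /=; rewrite scalerDl. Qed.
HB.instance Definition _ := GRing.Zmodule_isLmodule.Build k spt spscaleA spscale1 spscaleDr spscaleDl.
Lemma sp_linE c (a b : spt) i : proj1_sig (c *: a + b) i = c *: proj1_sig a i + proj1_sig b i.
Proof. by []. Qed.
End SP.


Section Base.
Variable k : comPzRingType.
Definition castM (A : TuraevMod k) (a b : tm_set A) (e : a = b) (x : tm_mod A a) : tm_mod A b :=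
  eq_rect a (fun c => (tm_mod A c : Type)) x b e.
Lemma castM_id (A : TuraevMod k) a (e : a = a) x : @castM A a a e x = x.
Proof. by rewrite (Prop_irrelevance e erefl). Qed.
Lemma castM_comp (A : TuraevMod k) a b c (e1 : a = b) (e2 : b = c) x :
  castM e2 (@castM A a b e1 x) = castM (etrans e1 e2) x.
Proof. by destruct e2. Qed.
Lemma castM_PI (A : TuraevMod k) a b (e1 e2 : a = b) x : @castM A a b e1 x = castM e2 x.
Proof. by rewrite (Prop_irrelevance e1 e2). Qed.
Lemma castM_lin (A : TuraevMod k) a b (e : a = b) c x y :
  @castM A a b e (c *: x + y) = c *: castM e x + castM e y.
Proof. by destruct e. Qed.
Lemma castM0 (A : TuraevMod k) a b (e : a = b) : @castM A a b e 0 = 0.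
Proof. by destruct e. Qed.

Lemma thom_ext (A B : TuraevMod k) (t1 t2 : TuraevHom A B) :
  (forall y, exists e : th_fun t1 y = th_fun t2 y,
     forall x, th_map t1 y x = th_map t2 y (castM e x)) -> t1 = t2.
Proof.
case: t1 t2 => [f1 m1 l1] [f2 m2 l2] /= H.
have ef : f1 = f2 by apply: funext => y; case: (H y).
subst f2.
have em : m1 = m2.
  apply: functional_extensionality_dep => y; apply: funext => x.
  by case: (H y) => e He; rewrite He castM_id.
subst m2; by rewrite (Prop_irrelevance l1 l2).
Qed.
Lemma thom_inv (A B : TuraevMod k) (t1 t2 : TuraevHom A B) : t1 = t2 ->
  forall y, exists e : th_fun t1 y = th_fun t2 y,
     forall x, th_map t1 y x = th_map t2 y (castM e x).
Proof. by move=> -> y; exists erefl. Qed.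
Lemma thom_fun (A B : TuraevMod k) (t1 t2 : TuraevHom A B) : t1 = t2 ->
  forall y, th_fun t1 y = th_fun t2 y.
Proof. by move=> ->. Qed.
Lemma lin0 (U V : lmodType k) (h : U -> V) : linear h -> h 0 = 0.
Proof. by move=> H; have := H (-1) 0 0; rewrite scaler0 addr0 scaleN1r addNr. Qed.
Lemma linB (U V : lmodType k) (h : U -> V) : linear h -> forall u v, h (u - v) = h u - h v.
Proof. by move=> H u v; have := H (-1) v u; rewrite !scaleN1r [- v + u]addrC => ->; rewrite addrC. Qed.
End Base.


Section Coeq.
Variables (k : comPzRingType) (A B : TuraevMod k) (F G : TuraevHom A B).
Definition Wset := {y : tm_set B | th_fun F y = th_fun G y}.
Definition Dpred (w : Wset) (n : tm_mod B (proj1_sig w)) : Prop :=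
  exists m : tm_mod A (th_fun F (proj1_sig w)),
    n = th_map F (proj1_sig w) m - th_map G (proj1_sig w) (castM (proj2_sig w) m).
Arguments Dpred : clear implicits.
Lemma Dpred0 w : Dpred w 0.
Proof.
exists 0; by rewrite castM0 (lin0 (th_lin F _)) (lin0 (th_lin G _)) subrr.
Qed.
Lemma DpredL w a u v : Dpred w u -> Dpred w v -> Dpred w (a *: u + v).
Proof.
move=> [m1 ->] [m2 ->]; exists (a *: m1 + m2).
rewrite castM_lin (th_lin F) (th_lin G).
by rewrite scalerBr opprD addrACA.
Qed.
Definition Dsub (w : Wset) : subm (tm_mod B (proj1_sig w)) := @Subm _ _ (Dpred w) (Dpred0 w) (@DpredL w).
Definition Qobj : TuraevMod k := @TMod k Wset (fun w => (quot (Dsub w) : lmodType k)).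
Definition qhom : TuraevHom B Qobj.
refine (@THom k B Qobj (fun w => proj1_sig w) (fun w n => pi (Dsub w) n) _).
by move=> w a u v /=; rewrite pi_lin.
Defined.
Lemma Weq (w1 w2 : Wset) : proj1_sig w1 = proj1_sig w2 -> w1 = w2.
Proof. by case: w1 w2 => [x1 p1] [x2 p2] /= E; subst x2; rewrite (Prop_irrelevance p1 p2). Qed.
Lemma cast_val (w1 w2 : tm_set Qobj) (e : w1 = w2) (x : tm_mod Qobj w1) :
  proj1_sig (castM e x) = castM (f_equal (@proj1_sig _ _) e) (proj1_sig x).
Proof. by destruct e. Qed.

Lemma coeq_ok : is_coequalizer F G qhom.
Proof.
split.
  apply: thom_ext => w /=; exists (proj2_sig w) => m.
  by apply: pi_eq; exists m.
move=> Z h Hh.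
have hf : forall v, th_fun F (th_fun h v) = th_fun G (th_fun h v) := thom_fun Hh.
have hm := thom_inv Hh.
pose uf (v : tm_set Z) : Wset := exist _ (th_fun h v) (hf v).
have kill : forall v n, Dpred (uf v) n -> th_map h v n = 0.
  move=> v n [m ->] /=.
  rewrite (linB (th_lin h v)); case: (hm v) => e /= He.
  by rewrite He (castM_PI (hf v) e) subrr.
have hval : forall v (n : tm_mod B (th_fun h v)),
    th_map h v (proj1_sig (pi (Dsub (uf v)) n)) = th_map h v n.
  move=> v n; apply/eqP; rewrite -subr_eq0 -(linB (th_lin h v)); apply/eqP.
  by apply: kill; apply: (eqv_val (Dsub (uf v)) n).
pose um (v : tm_set Z) (x : tm_mod Qobj (uf v)) : tm_mod Z v := th_map h v (proj1_sig x).
have uml : forall v, linear (@um v).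
  move=> v a x y; rewrite /um.
  elim/quot_ind: x => n1; elim/quot_ind: y => n2.
  by rewrite -pi_lin !hval (th_lin h).
exists (@THom k Qobj Z uf um uml); split.
  apply: thom_ext => v /=; exists erefl => n /=.
  by rewrite /um hval.
move=> u' Hu'; apply: thom_ext => v.
have e2 : th_fun u' v = uf v by apply: Weq; exact: (thom_fun Hu' v).
exists e2 => x /=; rewrite /um cast_val.
case: (thom_inv Hu' v) => e /= He.
rewrite -(pi_val x) He; congr (th_map h v _).
by rewrite pi_val; apply: castM_PI.
Qed.
End Coeq.


Section Equ.
Variables (k : comPzRingType) (A B : TuraevMod k) (F G : TuraevHom A B).
Definition Rel (x x' : tm_set A) : Prop :=
  forall S : tm_set A -> tm_set A -> Prop, (forall a, S a a) -> (forall a b, S a b -> S b a) ->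
    (forall a b c, S a b -> S b c -> S a c) -> (forall y, S (th_fun F y) (th_fun G y)) -> S x x'.
Lemma Rrefl x : Rel x x. Proof. by move=> S r. Qed.
Lemma Rsym x y : Rel x y -> Rel y x. Proof. rewrite /Rel => H SS hr hs ht hfg; apply: (hs); exact: (H SS hr hs ht hfg). Qed.
Lemma Rtrans x y z : Rel x y -> Rel y z -> Rel x z.
Proof. rewrite /Rel => H1 H2 SS hr hs ht hfg; apply: (ht _ y) => /=; [exact: (H1 SS hr hs ht hfg)|exact: (H2 SS hr hs ht hfg)]. Qed.
Lemma Rfg y : Rel (th_fun F y) (th_fun G y). Proof. by rewrite /Rel => S r s t fg; apply: fg. Qed.
Lemma Rclass x x' : Rel x x' -> Rel x = Rel x'.
Proof.
move=> H; apply: funext => z; apply: propext; split => H2.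
  by apply: Rtrans (Rsym H) H2.
by apply: Rtrans H H2.
Qed.
Definition Uset := {P : tm_set A -> Prop | exists x, P = Rel x}.
Definition cls (x : tm_set A) : Uset := exist _ (Rel x) (ex_intro _ x erefl).
Lemma Ueq (c1 c2 : Uset) : proj1_sig c1 = proj1_sig c2 -> c1 = c2.
Proof. by case: c1 c2 => [x1 p1] [x2 p2] /= E; subst x2; rewrite (Prop_irrelevance p1 p2). Qed.
Lemma cls_eq x x' : Rel x x' -> cls x = cls x'.
Proof. by move=> H; apply: Ueq; apply: Rclass. Qed.
Lemma Uinh (c : Uset) : exists x, proj1_sig c x.
Proof. by case: c => P [x E]; exists x; rewrite /= E; apply: Rrefl. Qed.
Lemma memR (c : Uset) x x' : proj1_sig c x -> proj1_sig c x' -> Rel x x'.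
Proof. by case: c => P [x0 E] /= H1 H2; rewrite E in H1 H2; apply: Rtrans (Rsym H1) H2. Qed.
Lemma Ucls (c : Uset) x : proj1_sig c x -> c = cls x.
Proof. by case: c => P [x0 E] /= H; apply: Ueq; rewrite /= E; rewrite E in H; apply: Rclass. Qed.

Definition Idx (c : Uset) := {x : tm_set A | proj1_sig c x}.
Definition Mi (c : Uset) (i : Idx c) : lmodType k := tm_mod A (proj1_sig i).
Definition Comp (c : Uset) (m : forall i : Idx c, Mi i) : Prop :=
  forall y (p1 : proj1_sig c (th_fun F y)) (p2 : proj1_sig c (th_fun G y)),
    th_map F y (m (exist _ (th_fun F y) p1)) = th_map G y (m (exist _ (th_fun G y) p2)).
Lemma Comp0 c : Comp (fun i : Idx c => 0).
Proof. by move=> y p1 p2; rewrite (lin0 (th_lin F y)) (lin0 (th_lin G y)). Qed.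
Lemma CompL c a m1 m2 : Comp m1 -> Comp m2 -> Comp (fun i : Idx c => a *: m1 i + m2 i).
Proof. by move=> H1 H2 y p1 p2; rewrite (th_lin F) (th_lin G) H1 H2. Qed.
Definition Lsub (c : Uset) : spsub (@Mi c) := @SpSub _ _ (@Mi c) (@Comp c) (@Comp0 c) (@CompL c).
Definition Eobj : TuraevMod k := @TMod k Uset (fun c => (spt (Lsub c) : lmodType k)).
Definition ehom : TuraevHom Eobj A.
refine (@THom k Eobj A cls (fun x m => proj1_sig m (exist _ x (Rrefl x))) _).
by move=> x a u v.
Defined.
Lemma castL (c1 c2 : tm_set Eobj) (e : c1 = c2) (m : tm_mod Eobj c1) x p1 p2 :
  proj1_sig (castM e m) (exist _ x p2) = proj1_sig m (exist _ x p1).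
Proof. by destruct e; rewrite (Prop_irrelevance p1 p2). Qed.

Lemma eq_ok : is_equalizer F G ehom.
Proof.
split.
  apply: thom_ext => y /=; exists (cls_eq (Rfg y)) => m.
  rewrite (castL (cls_eq (Rfg y)) m (Rfg y)).
  exact: (proj2_sig m y).
move=> Z h Hh.
have hf : forall y, th_fun h (th_fun F y) = th_fun h (th_fun G y) := thom_fun Hh.
have hm := thom_inv Hh.
have hR : forall x x', Rel x x' -> th_fun h x = th_fun h x'.
  move=> x x' H; apply: (H (fun a b => th_fun h a = th_fun h b)).
  - by [].
  - by move=> a b /= E; rewrite E.
  - by move=> a b c /= E1 E2; rewrite E1 E2.
  - exact: hf.
pose pick (c : Uset) : tm_set A := projT1 (cid (Uinh c)).
have pickP : forall c, proj1_sig c (pick c) := fun c => projT2 (cid (Uinh c)).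
pose uf (c : Uset) : tm_set Z := th_fun h (pick c).
have ei : forall c (i : Idx c), uf c = th_fun h (proj1_sig i).
  by move=> c i; apply: hR; apply: memR (pickP c) (proj2_sig i).
pose umraw (c : Uset) (r : tm_mod Z (uf c)) : forall i : Idx c, Mi i :=
  fun i => th_map h (proj1_sig i) (castM (ei c i) r).
have umP : forall c r, Comp (umraw c r).
  move=> c r y p1 p2; rewrite /umraw /=.
  case: (hm y) => e /= He; rewrite He castM_comp; congr (th_map G y (th_map h _ _)).
  exact: castM_PI.
pose um (c : Uset) (r : tm_mod Z (uf c)) : tm_mod Eobj c := exist _ (umraw c r) (umP c r).
have uml : forall c, linear (@um c).
  move=> c a x y; apply: spt_eq => i; rewrite sp_linE /= /umraw.
  by rewrite castM_lin (th_lin h).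
exists (@THom k Z Eobj uf um uml); split.
  apply: thom_ext => x /=; exists (ei (cls x) (exist _ x (Rrefl x))) => r /=.
  by [].
move=> u' Hu'; apply: thom_ext => c.
have [x px] := Uinh c.
have ec := Ucls px; subst c.
have hu'f : forall x, th_fun u' (cls x) = th_fun h x := thom_fun Hu'.
have hu'm := thom_inv Hu'.
have transp : forall c1 c2 (e : c1 = c2) r,
    th_map u' c2 (castM (f_equal (th_fun u') e) r) = castM e (th_map u' c1 r).
  by move=> c1 c2 e r; destruct e.
exists (etrans (hu'f x) (hR _ _ (pickP (cls x)))) => r.
apply: spt_eq => -[x' p] /=; rewrite /umraw /=.
rewrite -(castL (cls_eq p) (th_map u' (cls x) r) p (Rrefl x')).
rewrite -transp.
case: (hu'm x') => e' /= He'; rewrite He' !castM_comp.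
congr (th_map h x' _); exact: castM_PI.
Qed.
End Equ.


Theorem proposition2p6 (k : comPzRingType) :
  (forall (A B : TuraevMod k) (F G : TuraevHom A B),
     exists (E : TuraevMod k) (e : TuraevHom E A), is_equalizer F G e) /\
  (forall (A B : TuraevMod k) (F G : TuraevHom A B),
     exists (Q : TuraevMod k) (q : TuraevHom B Q), is_coequalizer F G q).
Proof.
split => A B F G.
  by exists (Eobj F G), (ehom F G); apply: eq_ok.
by exists (Qobj F G), (qhom F G); apply: coeq_ok.
Qed.
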